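(* Let $m\ge 2$ and let $M=(\{0,\dots,m-1\},\{a,b,c,d\},\delta_M,0,\{0\})$ be the DFA with $\delta_M(0,a)=m-1$ and $\delta_M(i,a)=i-1$ for $1\le i\le m-1$; $\delta_M(0,b)=1$ and $\delta_M(i,b)=i$ for $1\le i\le m-1$; $\delta_M(0,c)=1$, $\delta_M(1,c)=0$, and $\delta_M(j,c)=j$ for $2\le j\le m-1$; $\delta_M(i,d)=i$ for all $i$. Then the minimal complete DFA accepting $L(M)^R$ has exactly $2^m$ states.
   Context: For a language $L$, $L^R=\{w^R : w\in L\}$ where $w^R$ is the reversal of the word $w$. DFAs are complete deterministic finite automata $(Q,\Sigma,\delta,s,F)$. *)

(* Defs.v *)
From HB Require Import structures.
From mathcomp Require Import all_boot.
Set Implicit Arguments. Unset Strict Implicit. Unset Printing Implicit Defensive.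

Record dfa (Sigma : finType) := Dfa {
  state : finType;
  delta : state -> Sigma -> state;
  start : state;
  final : pred state }.

Definition delta_star (Sigma : finType) (A : dfa Sigma) (q : state A) (w : seq Sigma) : state A :=
  foldl (@delta Sigma A) q w.

Definition lang (Sigma : finType) (A : dfa Sigma) : pred (seq Sigma) :=
  fun w => @final Sigma A (@delta_star Sigma A (@start Sigma A) w).

Definition rev_lang (Sigma : Type) (L : pred (seq Sigma)) : pred (seq Sigma) :=
  fun w => L (rev w).

Definition min_dfa_states (Sigma : finType) (L : pred (seq Sigma)) (n : nat) : Prop :=
  (exists A : dfa Sigma, #|state A| = n /\ forall w, lang A w = L w) /\
  (forall A : dfa Sigma, (forall w, lang A w = L w) -> n <= #|state A|).

Inductive sym := sa | sb | sc | sd.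

Definition sym_to_ord (x : sym) : 'I_4 :=
  match x with sa => inord 0 | sb => inord 1 | sc => inord 2 | sd => inord 3 end.
Definition ord_to_sym (i : 'I_4) : sym :=
  match val i with 0 => sa | 1 => sb | 2 => sc | _ => sd end.
Lemma sym_to_ordK : cancel sym_to_ord ord_to_sym.
Proof. by case; rewrite /ord_to_sym /= inordK. Qed.

HB.instance Definition _ := Finite.copy sym (can_type sym_to_ordK).

Definition M_step (m : nat) (i : nat) (x : sym) : nat :=
  match x with
  | sa => if i == 0 then m.-1 else i.-1
  | sb => if i == 0 then 1 else i
  | sc => if i == 0 then 1 else if i == 1 then 0 else i
  | sd => i
  end.

Definition M_delta (n : nat) (i : 'I_n.+2) (x : sym) : 'I_n.+2 :=
  insubd i (M_step n.+2 (val i) x).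

Definition M_dfa (n : nat) : dfa sym :=
  @Dfa sym 'I_n.+2 (@M_delta n) ord0 (pred1 ord0).

(* Main.v *)
Require Import Defs.
From HB Require Import structures.
From mathcomp Require Import all_boot all_algebra.
Set Implicit Arguments. Unset Strict Implicit. Unset Printing Implicit Defensive.
Import GRing.Theory.
Local Open Scope ring_scope.

Section S.
Variable n : nat.
Local Notation Q := 'I_n.+2.

Lemma Ma (q : Q) : M_delta q sa = q - 1.
Proof.
apply: val_inj; rewrite /M_delta val_insubd /=.
have h1 : (1 %% n.+2 = 1)%N by rewrite modn_small.
rewrite h1 subSS subn0.
case: q => [[|i] Hi] /=.
  by rewrite ltnSn add0n !modn_small.
rewrite (ltnW Hi) (modn_small (ltnSn _)) addSnnS modnDr modn_small //; exact: ltnW.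
Qed.

Lemma Mb (q : Q) : M_delta q sb = if q == 0 then 1 else q.
Proof.
apply: val_inj; rewrite /M_delta val_insubd /=.
case: q => [[|i] Hi] //=.
by rewrite Hi.
Qed.

Lemma Mc (q : Q) : M_delta q sc = if q == 0 then 1 else if q == 1 then 0 else q.
Proof.
apply: val_inj; rewrite /M_delta val_insubd /=.
case: q => [[|[|i]] Hi] //=; rewrite ?Hi //.
Qed.

Definition dsM (q : Q) (w : seq sym) : Q := foldl (@M_delta n) q w.
Definition R (w : seq sym) : {set Q} := [set q | dsM q (rev w) == 0].
Definition reach (S : {set Q}) := exists w, R w = S.
Definition good (f : Q -> Q) := forall S, reach S -> reach [set q | f q \in S].

Lemma reach_pre x : good (fun q => M_delta q x).
Proof.
move=> S [w <-]; exists (rcons w x); apply/setP=> q.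
by rewrite !inE rev_rcons.
Qed.

Lemma good_ext f g : f =1 g -> good f -> good g.
Proof.
move=> fg gf S /gf; congr reach; apply/setP=> q; by rewrite !inE fg.
Qed.

Lemma good_comp f g : good f -> good g -> good (f \o g).
Proof.
move=> gf gg S /gf /gg; congr reach; apply/setP=> q; by rewrite !inE.
Qed.

Lemma good_subn k : good (fun q => q - k%:R).
Proof.
elim: k => [|k IH].
  apply: good_ext (fun q => q) _ _ _; first by move=> q; rewrite subr0.
  by move=> S; congr reach; apply/setP=> q; rewrite inE.
apply: good_ext (good_comp (@reach_pre sa) IH).
move=> q /=; by rewrite Ma mulrSr opprD addrA.
Qed.

Lemma good_add (t : Q) : good (fun q => q + t).
Proof.
apply: good_ext (good_subn (val (- t))).
by move=> q /=; rewrite (natr_Zp (- t)) opprK.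
Qed.

Definition sw (i q : Q) := if q == i then i + 1 else if q == i + 1 then i else q.

Lemma good_sw i : good (sw i).
Proof.
apply: good_ext (good_comp (good_add i) (good_comp (reach_pre sc) (good_add (- i)))).
move=> q /=; rewrite Mc /sw subr_eq0 subr_eq [1 + i]addrC.
case: eqP => [_|_]; first by rewrite addrC.
case: eqP => [_|_]; first by rewrite add0r.
by rewrite subrK.
Qed.

Lemma swK i : involutive (sw i).
Proof.
have h1 : (i + 1 == i) = false.
  by apply/negbTE; rewrite -subr_eq0 addrAC subrr add0r oner_eq0.
move=> q; rewrite /sw.
case: (eqVneq q i) => [->|hqi]; first by rewrite h1 eqxx.
case: (eqVneq q (i+1)) => [->|hq1]; first by rewrite eqxx.
by rewrite (negbTE hqi) (negbTE hq1).
Qed.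

Lemma val_add1 (i : Q) : ((val i).+1 < n.+2)%N -> val (i + 1) = (val i).+1.
Proof.
move=> h /=.
have h1 : (1 %% n.+2 = 1)%N by rewrite modn_small.
by rewrite h1 addn1 modn_small.
Qed.

Definition wt (S : {set Q}) := (\sum_(q in S) val q)%N.

Lemma wt_lt S : (wt S < n.+2 * n.+2)%N.
Proof.
apply: (@leq_ltn_trans (#|S| * n.+1)).
  rewrite /wt -sum_nat_const; apply: leq_sum => q _.
  by rewrite -ltnS ltn_ord.
apply: (@leq_ltn_trans (n.+2 * n.+1)).
  by have := leq_mul (max_card (mem S)) (leqnn n.+1); rewrite card_ord.
by rewrite ltn_mul2l /=.
Qed.

Lemma reach0 : reach [set 0].
Proof. by exists [::]; apply/setP=> q; rewrite !inE. Qed.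

Lemma reach1 j : reach [set j].
Proof.
have := good_add (- j) reach0; congr reach; apply/setP=> q.
by rewrite !inE subr_eq0.
Qed.

Lemma reach_set0 : reach set0.
Proof.
have := reach_pre sb reach0; congr reach; apply/setP=> q.
rewrite !inE Mb; case: (eqVneq q 0) => [_|/negbTE //].
exact/negbTE/oner_neq0.
Qed.

Lemma reach_adj k (S : {set Q}) j :
  (forall T : {set Q}, #|T| = k -> reach T) -> #|S| = k.+1 ->
  j \in S -> j + 1 \in S -> reach S.
Proof.
move=> IH hS hj hj1.
pose X : {set Q} := [set q | q + j \in S].
have cX : #|X| = #|S|.
  by have := card_preimset S (addIr j); congr (_ = _).
have hX0 : 0 \in X by rewrite inE add0r.
have hX1 : 1 \in X by rewrite inE addrC.
have cY : #|X :\ 0| = k.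
  by move: (cardsD1 0 X); rewrite hX0 cX hS add1n => -[].
have rX : reach X.
  have := reach_pre sb (IH _ cY); congr reach; apply/setP=> q.
  rewrite !inE Mb; case: (eqVneq q 0) => [->|hq].
    by rewrite oner_neq0 add0r addrC hj1 hj.
  by rewrite hq.
have := good_add (- j) rX; congr reach; apply/setP=> q.
by rewrite !inE subrK.
Qed.

Lemma reach_all S : reach S.
Proof.
suff H : forall k (S : {set Q}), #|S| = k -> reach S by exact: H.
elim=> [|k IHk] {}S hS.
  by rewrite (cards0_eq hS); exact: reach_set0.
case: k IHk hS => [|k] IHk hS.
  have /cards1P [j ->] : #|S| == 1 by rewrite hS.
  exact: reach1.
suff H : forall d (S : {set Q}), #|S| = k.+2 -> (n.+2 * n.+2 <= wt S + d)%N -> reach S.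
  by apply: (H (n.+2 * n.+2)) => //; rewrite leq_addl.
elim=> [|d IHd] {}S {}hS hd.
  by move: (wt_lt S); rewrite ltnNge -(addn0 (wt S)) hd.
have [i hiS himax] : exists2 i, i \in S & i != ord_max.
  have : (0 < #|S :\ ord_max|)%N.
    move: (cardsD1 ord_max S); rewrite hS.
    by case: (ord_max \in S) => /=; rewrite ?add1n ?add0n => -[<-].
  by move/card_gt0P => [i]; rewrite !inE => /andP [h1 h2]; exists i.
have hi1 : ((val i).+1 < n.+2)%N.
  have := ltn_ord i; rewrite ltnS leq_eqVlt => /orP [/eqP h|//].
  by case/eqP: himax; apply: val_inj; exact: h.
case hi1S : (i + 1 \in S).
  exact: (reach_adj IHk hS hiS hi1S).
pose S' : {set Q} := [set q | sw i q \in S].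
have inj : injective (sw i) := inv_inj (swK i).
have cS' : #|S'| = k.+2.
  by rewrite -hS; have := card_preimset S inj; congr (_ = _).
have wS' : wt S' = (wt S).+1.
  rewrite /wt (reindex_inj inj) /=.
  rewrite (eq_bigl (fun q => q \in S)); last by move=> q; rewrite inE swK.
  rewrite (bigD1 i hiS) [in RHS](bigD1 i hiS) /=.
  rewrite {1}/sw eqxx val_add1 // addSn; congr (_.+1 + _)%N.
  apply: eq_bigr => q /andP [hq hqi]; rewrite /sw (negbTE hqi).
  by case: eqP => // hq1; move: hi1S; rewrite -hq1 => /negbT/negP; case.
have rS' : reach S' by apply: IHd => //; rewrite wS' addSnnS.
have := good_sw i rS'; congr reach; apply/setP=> q.
by rewrite !inE swK.
Qed.

Definition revD : dfa sym :=
  @Dfa sym {set Q} (fun S x => [set q | M_delta q x \in S]) [set 0] (fun S => 0 \in S).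

Lemma revD_star (S : {set Q}) w :
  @delta_star _ revD S w = [set q | dsM q (rev w) \in S].
Proof.
elim: w S => [|x w IH] S /=.
  by apply/setP=> q; rewrite inE.
rewrite /delta_star /= -/(@delta_star _ revD _ w) IH; apply/setP=> q.
by rewrite !inE rev_cons /dsM foldl_rcons.
Qed.

Lemma revD_lang w : lang revD w = rev_lang (lang (M_dfa n)) w.
Proof.
by rewrite /lang /rev_lang revD_star /= !inE.
Qed.

Lemma dsM_nseq k (q : Q) : dsM q (nseq k sa) = q - k%:R.
Proof.
elim: k q => [|k IH] q; first by rewrite subr0.
by rewrite /= -/(dsM _ _) IH Ma mulrSr opprD addrA addrAC.
Qed.

Lemma lang_cat (A : dfa sym) w u :
  (forall w, lang A w = rev_lang (lang (M_dfa n)) w) ->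
  lang A (w ++ u) = (dsM 0 (rev u) \in R w).
Proof.
move=> hA; rewrite hA /rev_lang /lang rev_cat /delta_star foldl_cat inE.
by [].
Qed.

Lemma lower (A : dfa sym) :
  (forall w, lang A w = rev_lang (lang (M_dfa n)) w) -> (2 ^ n.+2 <= #|state A|)%N.
Proof.
move=> hA.
have ex S : exists w, R w == S by case: (reach_all S) => w hw; exists w; apply/eqP.
pose f (S : {set Q}) := delta_star (start A) (xchoose (ex S)).
have injf : injective f.
  move=> S T hST; apply/setP=> p.
  have hu : dsM 0 (rev (nseq (val (- p)) sa)) = p.
    by rewrite rev_nseq dsM_nseq (natr_Zp (- p)) sub0r opprK.
  rewrite -{1}(eqP (xchooseP (ex S))) -{1}(eqP (xchooseP (ex T))) -hu.
  rewrite -!(lang_cat _ _ hA) /lang /delta_star !foldl_cat.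
  by rewrite -/(delta_star _ (xchoose (ex S))) -/(delta_star _ (xchoose (ex T))) -/(f S) -/(f T) hST.
have := leq_card f injf.
by rewrite -cardsT -powersetT card_powerset cardsT card_ord.
Qed.
End S.

Local Close Scope ring_scope.

Theorem mainTheorem7 (m : nat) (hm : 2 <= m) :
  min_dfa_states (rev_lang (lang (M_dfa (m - 2)))) (2 ^ m).
Proof.
case: m hm => [|[|n]] // _.
have -> : (n.+2 - 2 = n)%N by rewrite subn2.
split.
  exists (revD n); split; last exact: revD_lang.
  by rewrite -cardsT -powersetT card_powerset cardsT card_ord.
exact: lower.
Qed.
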